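(* Suppose the nontrivial move problem has been solved: each agent $a$ holds a direction $\mathrm{dir}_a\in\{\text{right},\text{left}\}$ such that the round in which every agent starts in direction $\mathrm{dir}_a$ is a nontrivial move. Then the leader election problem can be solved in $O(\log N)$ further rounds.
   Context: Model: $n>4$ agents are at distinct, arbitrary initial positions on a circle of circumference $1$ and act in synchronised unit-time rounds. Each agent has its own notion of right (clockwise) and left; these need not be consistent across agents. At the start of a round each agent chooses a direction and moves at unit speed. Agents never pass: colliding moving agents instantly reverse direction. There is no communication. At the end of each round an agent learns the clockwise distance, in its own orientation, from its start-of-round to its end-of-round position. Agents have distinct IDs in $\{1,\dots,N\}$ with $N\ge n$ known. Rotation index: if $n_C$ agents start clockwise and $n_A$ anticlockwise (objective orientation), each agent moves to the initial position of the agent $(n_C-n_A)\bmod n$ places clockwise; this is the rotation index. A nontrivial move is a round whose rotation index is not in $\{0,n/2\}$. Leader election is solved when exactly one agent has status ''leader'' and all others have status ''non-leader''. *)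

(* Defs.v *)
From HB Require Import structures.
From mathcomp Require Import all_boot all_order all_algebra.
From mathcomp Require Import reals.
Set Implicit Arguments. Unset Strict Implicit. Unset Printing Implicit Defensive.
Import Order.TTheory GRing.Theory Num.Theory.
Local Open Scope ring_scope.

(* Conventions.
   - The n agents are numbered 0..n-1 in (objective) clockwise order of their
     initial positions p 0 < p 1 < ... < p (n-1), all in [0,1) (the circle of
     circumference 1, parametrised clockwise).  Only indices k < n matter.
   - chir i = true  iff agent i's "right" is objective clockwise.
   - A direction choice is a bool: true = right (in the agent's own sense).
   - By the rotation-index fact, after any round the multiset of positions is
     unchanged and agent at position index k moves to position index k + r
     (mod n); hence the global state is a cumulative shift s (mod n). *)

Section Model.
Variable R : realType.

Definition cwdist (x y : R) : R := if x <= y then y - x else y - x + 1.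

(* distance observed by an agent with orientation c, currently at position
   index k, in a round of rotation index r: the distance from its start to its
   end position, measured in its own clockwise (= right) direction *)
Definition observed (p : nat -> R) (n : nat) (c : bool) (k r : nat) : R :=
  let x := p (k %% n)%N in let y := p ((k + r) %% n)%N in
  if c then cwdist x y else cwdist y x.

Definition nClock (n : nat) (chir choice : nat -> bool) : nat :=
  count (fun i => choice i == chir i) (iota 0 n).

(* rotation index (n_C - n_A) mod n *)
Definition rotation_index (n : nat) (chir choice : nat -> bool) : nat :=
  let nC := nClock n chir choice in
  let nA := (n - nC)%N in
  ((nC + (n - nA)) %% n)%N.

Definition nontrivial_move (n r : nat) : bool := (r != 0%N) && (r.*2 != n).

(* A deterministic, communication-free protocol: each agent's choice and its
   final status depend only on its own ID, its direction dir_a, and the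
   sequence of distances it has observed so far.  (N is fixed outside.) *)
Record protocol := Protocol {
  choose : nat -> bool -> seq R -> bool ;   (* true = move right *)
  is_leader : nat -> bool -> seq R -> bool
}.

Fixpoint run (P : protocol) (n : nat) (p : nat -> R) (chir dir : nat -> bool)
  (id : nat -> nat) (t : nat) : nat * (nat -> seq R) :=
  match t with
  | 0 => (0%N, fun _ => [::])
  | t'.+1 =>
    let (s, h) := run P n p chir dir id t' in
    let c := fun i => choose P (id i) (dir i) (h i) in
    let r := rotation_index n chir c in
    ((s + r)%N, fun i => rcons (h i) (observed p n (chir i) (i + s) r))
  end.

Definition elected (P : protocol) (n : nat) (p : nat -> R) (chir dir : nat -> bool)
  (id : nat -> nat) (t : nat) : bool :=
  count (fun i => is_leader P (id i) (dir i) ((run P n p chir dir id t).2 i))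
        (iota 0 n) == 1%N.

Definition valid_config (N n : nat) (p : nat -> R) (id : nat -> nat) : Prop :=
  [/\ (forall i, (i < n)%N -> 0 <= p i < 1),
      (forall i j, (i < j)%N -> (j < n)%N -> p i < p j),
      (forall i, (i < n)%N -> (1 <= id i <= N)%N) &
      (forall i j, (i < n)%N -> (j < n)%N -> id i = id j -> i = j)].

End Model.

(* Main.v *)
Require Import Defs.
From HB Require Import structures.
From mathcomp Require Import all_boot all_order all_algebra.
From mathcomp Require Import reals.
From mathcomp Require Import ring lra zify.
Import Order.TTheory GRing.Theory Num.Theory.
Local Open Scope ring_scope.

Definition natcyc (a b c : nat) := [|| (a<b)&&(b<c), (b<c)&&(c<a) | (c<a)&&(a<b)]%N.

Lemma natcyc_rev a b c : a != b -> b != c -> c != a -> natcyc c b a = ~~ natcyc a b c.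
Proof. rewrite /natcyc => h1 h2 h3. apply/idP/idP => H; lia. Qed.

Lemma orient_idx (n k r : nat) : (0 < r < n)%N -> (r + r != n)%N ->
  let a := (k %% n)%N in let b := ((k + r) %% n)%N in let c := ((k + r + r) %% n)%N in
  [/\ a != b, b != c, c != a & natcyc a b c = (r + r < n)%N].
Proof.
move=> /andP[r0 rn] hrr /=.
have n0 : (0 < n)%N by lia.
have -> : ((k + r) %% n = (k %% n + r) %% n)%N by rewrite modnDml.
have -> : ((k + r + r) %% n = (k %% n + r + r) %% n)%N by rewrite -!addnA modnDml.
have : (k %% n < n)%N by rewrite ltn_pmod.
move: (k %% n)%N => a an.
have hb := divn_eq (a + r) n; have hbl := ltn_pmod (a + r) n0.
have qb : ((a + r) %/ n < 2)%N by rewrite ltn_divLR //; lia.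
have hc := divn_eq (a + r + r) n; have hcl := ltn_pmod (a + r + r) n0.
have qc : ((a + r + r) %/ n < 3)%N by rewrite ltn_divLR //; lia.
move: hb hbl qb hc hcl qc.
move: ((a + r) %/ n)%N ((a + r) %% n)%N ((a + r + r) %/ n)%N ((a + r + r) %% n)%N => q1 b q2 c.
rewrite /natcyc.
case: q1 => [|[|q1]] //; case: q2 => [|[|[|q2]]] //; rewrite ?mul0n ?mul1n ?mul2n => hb hbl _ hc hcl _;
  split; try (apply/eqP; lia); apply/idP/idP => H; lia.
Qed.

Lemma count_split (a b : pred nat) s :
  count a s = (count (fun i => a i && b i) s + count (fun i => a i && ~~ b i) s)%N.
Proof. elim: s => //= x s ->; case: (a x); case: (b x) => /=; lia. Qed.

Lemma cnt_eqb (a : pred nat) s (bb : bool) :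
  count (fun i => a i == bb) s = if bb then count a s else (size s - count a s)%N.
Proof.
case: bb.
  by apply: eq_count => i; rewrite eqb_id.
rewrite -(count_predC a s) addKn; apply: eq_count => i; by rewrite eqbF_neg.
Qed.

Lemma dvd_sym n x : (x <= n)%N -> (n %| (n - x) + (n - x))%N = (n %| x + x)%N.
Proof.
move=> hx.
have h : (n %| ((n - x) + (n - x)) + (x + x))%N.
  by rewrite (_ : _ + _ = n * 2)%N ?dvdn_mulr //; lia.
apply/idP/idP => H.
  by rewrite -(dvdn_addr _ H).
by rewrite -(dvdn_addl _ H).
Qed.

Lemma rot_formula n x : (x <= n)%N -> ((x + (n - (n - x))) %% n = (x + x) %% n)%N.
Proof. by move=> hx; rewrite subKn. Qed.

Section Reals.
Variable R : realType.

Lemma cw_sum (x y z : R) : 0 <= x < 1 -> 0 <= y < 1 -> 0 <= z < 1 ->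
  x != y -> y != z -> z != x ->
  (cwdist x y + cwdist y z < 1) = [|| (x < y) && (y < z), (y < z) && (z < x) | (z < x) && (x < y)].
Proof.
move=> /andP[x0 x1] /andP[y0 y1] /andP[z0 z1] hxy hyz hzx; rewrite /cwdist.
case: (ltgtP x y) hxy => // hxy _; case: (ltgtP y z) hyz => // hyz _;
  case: (ltgtP z x) hzx => // hzx _ /=;
  try (apply/idP; lra); try (apply/negbTE; rewrite -leNgt; lra); exfalso; lra.
Qed.

Lemma cwdist0 (x y : R) : 0 <= x < 1 -> 0 <= y < 1 -> (cwdist x y == 0) = (x == y).
Proof.
move=> /andP[x0 x1] /andP[y0 y1]; rewrite /cwdist; case: ifP => h.
  by rewrite subr_eq0 eq_sym.
have hxy : y < x by rewrite ltNge h.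
rewrite (_ : (x == y) = false); last by rewrite gt_eqF.
have hp : 0 < y - x + 1 by lra.
by rewrite gt_eqF.
Qed.

End Reals.
Section Proto.
Variables (R : realType) (L : nat).

Definition bdir (h : seq R) : bool := nth 0 h 0 + nth 0 h 1 < 1.
Definition outh (h : seq R) (j : nat) : bool := nth 0 h j.+2 != 0.
Fixpoint loh (h : seq R) (j : nat) : nat :=
  if j is j'.+1 then (if outh h j' then loh h j' + 2 ^ (L - j) else loh h j')%N else 0%N.
Definition inS (id : nat) (d : bool) (h : seq R) (j : nat) : bool :=
  (d == bdir h) && (loh h j + 2 ^ (L - j.+1) <= id < loh h j + 2 ^ (L - j))%N.
Definition pchoose (id : nat) (d : bool) (h : seq R) : bool :=
  if (size h < 2)%N then d else if inS id d h (size h - 2) then bdir h else ~~ bdir h.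
Definition pleader (id : nat) (d : bool) (h : seq R) : bool :=
  (d == bdir h) && (loh h L <= id < loh h L + 2 ^ (L - L))%N.
Definition proto : protocol R := Protocol pchoose pleader.

Lemma runS n p chir dir id t : run proto n p chir dir id t.+1 =
  (let (s, h) := run proto n p chir dir id t in
    let c := fun i => Defs.choose proto (id i) (dir i) (h i) in
    let r := rotation_index n chir c in
    ((s + r)%N, fun i => rcons (h i) (observed p n (chir i) (i + s) r))).
Proof. by []. Qed.

Variables (N n : nat) (p : nat -> R) (chir dir : nat -> bool) (ids : nat -> nat).
Hypotheses (n4 : (4 < n)%N) (hvc : valid_config N n p ids) (hNL : (N < 2 ^ L)%N)
  (hnt : nontrivial_move n (rotation_index n chir dir)).

Let r0 := rotation_index n chir dir.
Let g := (r0 + r0 < n)%N.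
Let b i := chir i == g.
Let P i := dir i == b i.
Let cS l j := count (fun i => P i && (l + 2 ^ (L - j.+1) <= ids i < l + 2 ^ (L - j))%N) (iota 0 n).
Fixpoint loC j : nat :=
  if j is j'.+1 then (if ~~ (n %| cS (loC j') j' + cS (loC j') j')%N
     then loC j' + 2 ^ (L - j) else loC j')%N else 0%N.
Let outC j := ~~ (n %| cS (loC j) j + cS (loC j) j)%N.

Lemma n0 : (0 < n)%N. Proof. lia. Qed.

Lemma prange i : (i < n)%N -> 0 <= p i < 1.
Proof. by case: hvc => h _ _ _; apply: h. Qed.

Lemma plt u v : (u < n)%N -> (v < n)%N -> (p u < p v) = (u < v)%N.
Proof.
case: hvc => _ h _ _ un vn; case: (ltngtP u v) => [uv|vu|->].
- exact: h.
- by apply/negbTE; rewrite -leNgt ltW // h.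
- by rewrite ltxx.
Qed.

Lemma peq u v : (u < n)%N -> (v < n)%N -> (p u == p v) = (u == v).
Proof.
move=> un vn; case: (ltngtP u v) => [uv|vu|->]; last by rewrite !eqxx.
- by rewrite lt_eqF // plt.
- by rewrite gt_eqF // plt.
Qed.

Lemma r0lt : (r0 < n)%N.
Proof. by rewrite /r0 /rotation_index ltn_pmod // n0. Qed.

Lemma obs_zero c k r : (r < n)%N -> (observed p n c k r == 0) = (r == 0%N).
Proof.
move=> rn; rewrite /observed.
have an : (k %% n < n)%N by rewrite ltn_pmod // n0.
have bn : ((k + r) %% n < n)%N by rewrite ltn_pmod // n0.
have E : (((k %% n == (k + r) %% n)%N) = (r == 0%N)).
  rewrite -modnDml; move: an; move: (k %% n)%N => a an.
  have hb := divn_eq (a + r) n; have hbl := ltn_pmod (a + r) n0.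
  have qb : ((a + r) %/ n < 2)%N by rewrite ltn_divLR ?n0 //; lia.
  move: hb hbl qb; move: ((a + r) %/ n)%N ((a + r) %% n)%N => q1 b'.
  case: q1 => [|[|q1]] //; rewrite ?mul0n ?mul1n => hb hbl _; apply/eqP/eqP; lia.
case: c.
  by rewrite cwdist0 ?prange // peq // E.
by rewrite cwdist0 ?prange // peq // eq_sym E.
Qed.

Lemma run2 : run proto n p chir dir ids 2 =
  ((0 + r0 + r0)%N, fun i => [:: observed p n (chir i) (i + 0) r0;
                       observed p n (chir i) (i + (0 + r0)) r0]).
Proof.
by [].
Qed.

Lemma r0prop : (0 < r0 < n)%N /\ (r0 + r0 != n)%N.
Proof.
move: hnt; rewrite /nontrivial_move -/r0 => /andP[h1 h2].
by rewrite addnn r0lt h2 lt0n h1.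
Qed.

Lemma bdir2 i : (i < n)%N ->
  bdir [:: observed p n (chir i) (i + 0) r0; observed p n (chir i) (i + (0 + r0)) r0] = b i.
Proof.
move=> iN; rewrite /bdir /= /observed addn0 add0n.
case: r0prop => h1 h2.
have [hab hbc hca hcyc] := orient_idx n i r0 h1 h2.
have an : (i %% n < n)%N by rewrite ltn_pmod // n0.
have bn : ((i + r0) %% n < n)%N by rewrite ltn_pmod // n0.
have cn : ((i + r0 + r0) %% n < n)%N by rewrite ltn_pmod // n0.
rewrite /b; case: (chir i).
  rewrite cw_sum ?prange ?peq // !plt // -/(natcyc _ _ _) hcyc.
rewrite addrC cw_sum ?prange ?peq // 1?eq_sym // !plt // -/(natcyc _ _ _) natcyc_rev // hcyc.
by rewrite /g; case: (r0 + r0 < n)%N.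
Qed.

Lemma loh_eq h j : (forall j', (j' < j)%N -> outh h j' = outC j') -> loh h j = loC j.
Proof.
elim: j => [|j IH] H //=.
rewrite IH; last by move=> j' hj'; apply: H; lia.
by rewrite -/(outC j) H.
Qed.

Lemma test_round (h : nat -> seq R) t :
  (forall i, (i < n)%N -> [/\ size (h i) = t.+2, bdir (h i) = b i &
      forall j, (j < t)%N -> outh (h i) j = outC j]) ->
  let rot := rotation_index n chir (fun i => pchoose (ids i) (dir i) (h i)) in
  (rot < n)%N /\ (rot == 0%N) = ~~ outC t.
Proof.
move=> H rot; split; first by rewrite /rot /rotation_index ltn_pmod // n0.
set Sm := fun i => P i && (loC t + 2 ^ (L - t.+1) <= ids i < loC t + 2 ^ (L - t))%N.
have E : nClock n chir (fun i => pchoose (ids i) (dir i) (h i)) =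
         count (fun i => Sm i == g) (iota 0 n).
  rewrite /nClock; apply: eq_in_count => i; rewrite mem_iota add0n => /andP[_ iN].
  have [hs hb ho] := H i iN.
  rewrite /pchoose hs ltnNge (_ : (2 <= t.+2)%N) //= subSS subSS subn0.
  rewrite /inS hb (loh_eq (h i) t ho) -/(P i) -/(Sm i) /b.
  by case: (Sm i); case: (chir i); case: g.
have xn : (count Sm (iota 0 n) <= n)%N by rewrite -{2}(size_iota 0 n) count_size.
rewrite /rot /rotation_index E cnt_eqb size_iota /outC negbK.
case: g.
  by rewrite rot_formula.
rewrite rot_formula ?leq_subr // -[X in X = _]/(n %| _)%N dvd_sym //.
Qed.

Lemma inv t i : (i < n)%N ->
  let h := (run proto n p chir dir ids t.+2).2 i in
  [/\ size h = t.+2, bdir h = b i & forall j, (j < t)%N -> outh h j = outC j].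
Proof.
elim: t i => [|t IH] i iN.
  by rewrite run2 /= bdir2.
rewrite runS; move: IH; case: (run proto n p chir dir ids t.+2) => s h /= IH.
have [rn rz] := test_round h t IH.
move: rn rz.
set rot := rotation_index _ _ _ => rn rz.
have [hs hb ho] := IH i iN.
have nr k : (k < t.+2)%N -> nth 0 (rcons (h i) (observed p n (chir i) (i + s) rot)) k = nth 0 (h i) k.
  by move=> hk; rewrite nth_rcons hs hk.
split.
- by rewrite size_rcons hs.
- by rewrite /bdir !nr // -hb.
- move=> j hj; rewrite /outh.
  have [jt| ->] : (j < t)%N \/ j = t by lia.
    by rewrite nr // -ho.
  by rewrite nth_rcons hs ltnn eqxx obs_zero // rz negbK.
Qed.

Let K j := count (fun i => P i && (loC j <= ids i < loC j + 2 ^ (L - j))%N) (iota 0 n).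

Lemma splitK l w : count (fun i => P i && (l <= ids i < l + (w + w))%N) (iota 0 n) =
  (count (fun i => P i && (l + w <= ids i < l + w + w))%N (iota 0 n) +
   count (fun i => P i && (l <= ids i < l + w))%N (iota 0 n))%N.
Proof.
rewrite (count_split _ (fun i => l + w <= ids i)%N); congr (_ + _)%N;
  apply: eq_count => i /=; case: (P i) => //=; apply/idP/idP => H; lia.
Qed.

Lemma vis j : (j <= L)%N -> ~~ (n %| K j + K j)%N.
Proof.
elim: j => [|j IH] hj.
  have -> : K 0 = count (fun i => (dir i == chir i) == g) (iota 0 n).
    rewrite /K /=; apply: eq_in_count => i; rewrite mem_iota add0n => /andP[_ iN].
    case: hvc => _ _ hid _; have /andP[_ hiN] := hid i iN.
    rewrite subn0 (_ : (ids i < 2 ^ L)%N); last by apply: leq_ltn_trans hNL.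
    by rewrite andbT /P /b; case: (dir i); case: (chir i); case: g.
  have xn : (count (fun i => dir i == chir i) (iota 0 n) <= n)%N
    by rewrite -{2}(size_iota 0 n) count_size.
  case: r0prop => /andP[h1 _] _.
  move: h1; rewrite lt0n /r0 /rotation_index /nClock rot_formula //.
  rewrite cnt_eqb size_iota; case: g => //.
  by rewrite dvd_sym.
have jL : (j < L)%N by [].
have IH' := IH (ltnW jL).
set l := loC j; set w := (2 ^ (L - j.+1))%N.
have hw : (2 ^ (L - j) = w + w)%N.
  rewrite /w (_ : (L - j = (L - j.+1).+1)%N); last by lia.
  by rewrite expnS mul2n addnn.
have Kj : K j = (cS l j + count (fun i => P i && (l <= ids i < l + w))%N (iota 0 n))%N.
  rewrite /K -/l hw splitK; congr (_ + _)%N.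
  by apply: eq_count => i; rewrite /= -/w hw addnA.
have hcs : cS l j = count (fun i => P i && (l + w <= ids i < l + w + w))%N (iota 0 n).
  by apply: eq_count => i; rewrite /= -/w hw addnA.
rewrite /K /=  -/l -/w.
case hout: (~~ (n %| cS l j + cS l j))%N.
  by rewrite -hcs.
move/negbFE: hout => hd.
move: IH'; rewrite Kj.
set a := cS l j; set c := count _ _.
rewrite (_ : (a + c + (a + c) = (a + a) + (c + c))%N); last by lia.
by rewrite dvdn_addr.
Qed.

Lemma cnt_id1 l : (count (fun i => ids i == l) (iota 0 n) <= 1)%N.
Proof.
rewrite -size_filter.
set F := filter _ _.
have hF : {in F &, injective ids}.
  move=> x y; rewrite !mem_filter !mem_iota !add0n => /andP[_ /andP[_ xn]] /andP[_ /andP[_ yn]].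
  by case: hvc => _ _ _ hinj; apply: hinj.
rewrite -(size_map ids) -[1%N]/(size [:: l]).
apply: uniq_leq_size.
  by rewrite map_inj_in_uniq // filter_uniq // iota_uniq.
move=> x /mapP[y]; rewrite mem_filter => /andP[/eqP <- _] ->.
by rewrite mem_seq1.
Qed.

Lemma main_elected : elected proto n p chir dir ids L.+2.
Proof.
rewrite /elected.
have -> : count (fun i => is_leader proto (ids i) (dir i) ((run proto n p chir dir ids L.+2).2 i))
   (iota 0 n) = K L.
  apply: eq_in_count => i; rewrite mem_iota add0n => /andP[_ iN].
  have [hs hb ho] := inv L i iN.
  by rewrite /= /pleader hb (loh_eq _ L ho).
have hv := vis L (leqnn L).
have : (K L <= 1)%N.
  apply: leq_trans (cnt_id1 (loC L)).
  rewrite /K subnn expn0; apply: sub_count => i /= /andP[_ H].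
  apply/eqP; lia.
case: (K L) hv => [|[|k]] //.
by rewrite addn0 dvdn0.
Qed.
End Proto.

Theorem lemma7 (R : realType) :
  exists C : nat, forall N : nat, exists T : nat,
    (T <= C * trunc_log 2 N)%N /\
    exists P : protocol R,
      forall (n : nat) (p : nat -> R) (chir dir : nat -> bool) (ids : nat -> nat),
        (4 < n)%N -> (n <= N)%N -> valid_config N n p ids ->
        nontrivial_move n (rotation_index n chir dir) ->
        elected P n p chir dir ids T.
Proof.
exists 4%N => N.
case: (ltnP N 2) => hN.
  exists 0%N; split => //; exists (proto R 0) => n p chir dir ids h4 hn; lia.
have tl : (0 < trunc_log 2 N)%N by rewrite trunc_log_gt0 /=.
exists (trunc_log 2 N).+3; split; first by lia.
exists (proto R (trunc_log 2 N).+1) => n p chir dir ids h4 hn hv hnt.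
have hL : (N < 2 ^ (trunc_log 2 N).+1)%N by exact: trunc_log_ltn.
exact: (@main_elected R (trunc_log 2 N).+1 N n p chir dir ids h4 hv hL hnt).
Qed.
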